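(* Let $W_i=V_i\epsilon_i$, $i=1,\dots,n$, with $V_i\sim\mathcal M[\underline\sigma,\overline\sigma]$ and $\epsilon_i\sim N(0,1)$. Then $$V_1\dashrightarrow\epsilon_1\dashrightarrow V_2\dashrightarrow\epsilon_2\dashrightarrow\cdots\dashrightarrow V_n\dashrightarrow\epsilon_n$$ holds if and only if both (F1) $(V_1,\epsilon_1)\dashrightarrow(V_2,\epsilon_2)\dashrightarrow\cdots\dashrightarrow(V_n,\epsilon_n)$ and (F2) $V_i\dashrightarrow\epsilon_i$ for $i=1,\dots,n$ hold.
   Context: Sublinear expectation space $(\Omega,\mathcal H,\hat{\mathbb E})$, $\hat{\mathbb E}[X]=\sup_{Q\in\mathcal P}E_Q[X]$. $C_{b,Lip}$: bounded Lipschitz functions. For random vectors $X,Y$, $X\dashrightarrow Y$ ($Y$ independent from $X$) means $\hat{\mathbb E}[\varphi(X,Y)]=\hat{\mathbb E}[\hat{\mathbb E}[\varphi(x,Y)]_{x=X}]$ for all $\varphi\in C_{b,Lip}$; $X_1\dashrightarrow\cdots\dashrightarrow X_n$ means $(X_1,\dots,X_i)\dashrightarrow X_{i+1}$ for $i=1,\dots,n-1$. $V\sim\mathcal M[\underline\sigma,\overline\sigma]$: $\hat{\mathbb E}[\varphi(V)]=\max_{v\in[\underline\sigma,\overline\sigma]}\varphi(v)$ for locally Lipschitz-growth $\varphi$. $\epsilon\sim N(0,1)$: $\hat{\mathbb E}[\varphi(\epsilon)]=E[\varphi(Z)]$, $Z$ classical standard normal. *)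

(* Defs.v *)
From HB Require Import structures.
From mathcomp Require Import all_boot all_order all_algebra.
From mathcomp Require Import all_classical all_reals all_analysis.
Set Implicit Arguments. Unset Strict Implicit. Unset Printing Implicit Defensive.
Import Order.TTheory GRing.Theory Num.Theory.
Import numFieldNormedType.Exports.
Local Open Scope classical_set_scope.
Local Open Scope ring_scope.

Section SublinearExpectation.
Context {d : measure_display} {Omega : measurableType d} {R : realType}.
Variable P : set (probability Omega R).

Definition sExpE (f : Omega -> \bar R) : \bar R :=
  ereal_sup [set (\int[Q]_w f w)%E | Q in P].

Definition sExp (X : Omega -> R) : \bar R := sExpE (fun w => (X w)%:E).

(* bounded Lipschitz functions on R^n (row vectors, sup norm) *)
Definition bLip (n : nat) (phi : 'rV[R]_n -> R) : Prop :=
  (exists M : R, forall x, `|phi x| <= M) /\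
  (exists L : R, forall x y, `|phi x - phi y| <= L * `|x - y|).

(* Y is independent from X :  X --> Y *)
Definition indep (p q : nat) (X : Omega -> 'rV[R]_p) (Y : Omega -> 'rV[R]_q)
  : Prop :=
  forall phi : 'rV[R]_(p + q) -> R, bLip phi ->
    sExp (fun w => phi (row_mx (X w) (Y w))) =
    sExpE (fun w => sExp (fun w' => phi (row_mx (X w) (Y w')))).

Definition locLipGrowth (phi : R -> R) : Prop :=
  exists (C : R) (k : nat), forall x y,
    `|phi x - phi y| <= C * (1 + `|x| ^+ k + `|y| ^+ k) * `|x - y|.

Definition maximal_distributed (V : Omega -> R) (sl sh : R) : Prop :=
  forall phi, locLipGrowth phi ->
    sExp (phi \o V) = ereal_sup [set (phi v)%:E | v in `[sl, sh]].

Definition std_normal (e : Omega -> R) : Prop :=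
  forall phi, locLipGrowth phi ->
    sExp (phi \o e) =
    (\int[lebesgue_measure]_x (phi x * normal_pdf 0 1 x)%:E)%E.

Definition blk (Z : nat -> Omega -> R) (k m : nat) : Omega -> 'rV[R]_m :=
  fun w => \row_(j < m) Z (k + j)%N w.

Definition interleave (V e : nat -> Omega -> R) : nat -> Omega -> R :=
  fun k => if odd k then e k./2 else V k./2.

(* Z_1 --> Z_2 --> ... --> Z_m for scalar random variables (0-indexed) *)
Definition seq_indep (Z : nat -> Omega -> R) (m : nat) : Prop :=
  forall k, (1 <= k)%N -> (k < m)%N -> indep (blk Z 0 k) (blk Z k 1).

(* (F1): (V_1,e_1) --> (V_2,e_2) --> ... --> (V_n,e_n) *)
Definition F1 (V e : nat -> Omega -> R) (n : nat) : Prop :=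
  forall i, (1 <= i)%N -> (i < n)%N ->
    indep (blk (interleave V e) 0 (2 * i)) (blk (interleave V e) (2 * i) 2).

Definition F2 (V e : nat -> Omega -> R) (n : nat) : Prop :=
  forall i, (i < n)%N -> indep (blk V i 1) (blk e i 1).

End SublinearExpectation.

(* Main.v *)
Set Warnings "-all".
Require Import Defs.
Set Warnings "-all".
From HB Require Import structures.
From mathcomp Require Import all_boot all_order all_algebra.
From mathcomp Require Import all_classical all_reals all_analysis.
From mathcomp Require Import zify.
From mathcomp Require Import ring lra.
Import Order.TTheory GRing.Theory Num.Theory.
Import numFieldNormedType.Exports.
Local Open Scope classical_set_scope.
Local Open Scope ring_scope.

Lemma mxnorm_ge (R : realType) m n (A : 'M[R]_(m,n)) i j : `|A i j| <= `|A|.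
Proof.
rewrite [leRHS]/Num.norm /= mx_normrE; apply/bigmax_geP; right => /=; by exists (i,j).
Qed.

Lemma mxnorm_le (R : realType) m n (A : 'M[R]_(m,n)) c : 0 <= c ->
  (forall i j, `|A i j| <= c) -> `|A| <= c.
Proof.
move=> c0 H; rewrite [leLHS]/Num.norm /= mx_normrE; apply/bigmax_leP; split => // -[i j] _; exact: H.
Qed.
Section S.
Context {d : measure_display} {Omega : measurableType d} {R : realType}.
Variable P : set (probability Omega R).

Lemma lip_cont (G : R -> R) L : (forall x y, `|G x - G y| <= L * `|x - y|) -> continuous G.
Proof.
move=> HG x; apply/cvgrPdist_lt => e e0.
have L1 : 0 < `|L| + 1 by rewrite ltr_wpDl.
have e1 : 0 < e / (`|L| + 1) by rewrite divr_gt0.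
near=> y.
apply: (le_lt_trans (HG x y)).
have H : `|x - y| < e / (`|L|+1).
  near: y. exact: (cvgr_dist_lt id x (@cvg_id _ (nbhs x)) _ e1).
apply: (le_lt_trans (y := (`|L|+1) * `|x - y|)).
  by apply: ler_wpM2r => //; apply: le_trans (ler_norm L) _; rewrite lerDl.
by move: H; rewrite ltr_pdivlMr // mulrC.
Unshelve. all: end_near.
Qed.

Lemma bint (Q : probability Omega R) (h : Omega -> R) M :
  measurable_fun setT h -> (forall w, `|h w| <= M) -> Q.-integrable setT (EFin \o h).
Proof.
move=> mh hM; apply: measurable_bounded_integrable => //.
  by rewrite ltey_eq fin_num_measure.
rewrite /bounded_near; near=> M' => w _ /=.
apply: le_trans (hM w) _.
by near: M'; apply: nbhs_pinfty_ge; rewrite num_real.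
Unshelve. all: end_near.
Qed.

Lemma int_le (Q : probability Omega R) (f g : Omega -> R) c M :
  measurable_fun setT f -> measurable_fun setT g ->
  (forall w, `|f w| <= M) -> (forall w, `|g w| <= M) ->
  (forall w, f w <= g w + c) ->
  (\int[Q]_w (f w)%:E <= \int[Q]_w (g w)%:E + c%:E)%E.
Proof.
move=> mf mg fM gM fg.
have ig := @bint Q g M mg gM.
have ic : Q.-integrable setT (EFin \o (fun _ : Omega => c)).
  by apply: (@bint Q _ `|c|) => //; exact: measurable_cst.
have igc : Q.-integrable setT (EFin \o (fun w => g w + c)).
  apply: (@bint Q _ (M + `|c|)); first by apply: measurable_realfun.measurable_funD => //; exact: measurable_cst.
  by move=> w; apply: le_trans (ler_normD _ _) _; rewrite lerD2r.
apply: (le_trans (y := (\int[Q]_w ((g w + c)%:E))%E)).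
  apply: le_integral => //; first exact: (@bint Q f M mf fM).
  by move=> w _; rewrite lee_fin.
under eq_integral do rewrite EFinD.
rewrite integralD //.
rewrite integral_cst //. set q := (X in (_ * X)%E). have q1 : q = 1%E by rewrite /q; exact: probability_setT. by rewrite q1 mule1.
Qed.


Lemma sExp_le (f g : Omega -> R) (c M : R) :
  measurable_fun setT f -> measurable_fun setT g ->
  (forall w, `|f w| <= M) -> (forall w, `|g w| <= M) ->
  (forall w, f w <= g w + c) ->
  (sExp P f <= sExp P g + c%:E)%E.
Proof.
move=> mf mg fM gM fg; apply/ereal_supP => _ [Q PQ <-].
apply: le_trans (int_le Q f g c M mf mg fM gM fg) _.
apply: leeD2r; apply: ereal_sup_ubound; by exists Q.
Qed.

Lemma sExp0 : (exists Q, P Q) -> sExp P (fun _ => 0) = 0%E.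
Proof.
case=> Q PQ; rewrite /sExp /sExpE.
have -> : [set (\int[Q']_w ((0:R)%:E))%E | Q' in P] = [set 0%E].
  apply/seteqP; split => x /=.
    by case=> Q' _ <-; rewrite integral0.
  by move=> ->; exists Q => //; rewrite integral0.
by rewrite ereal_sup1.
Qed.

Lemma sExp_fin (f : Omega -> R) (M : R) : (exists Q, P Q) -> measurable_fun setT f ->
  (forall w, `|f w| <= M) ->
  sExp P f = (fine (sExp P f))%:E /\ `|fine (sExp P f)| <= M.
Proof.
move=> PQ mf fM.
have m0 : measurable_fun setT (fun _ : Omega => (0:R)) by exact: measurable_cst.
have f0 : forall w, `|f w| <= `|M| by move=> w; apply: le_trans (fM w) (ler_norm M).
have z0 : forall w : Omega, `|(0:R)| <= `|M| by move=> w; rewrite normr0.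
have up := sExp_le f (fun _ => 0) M `|M| mf m0 f0 z0.
have lo := sExp_le (fun _ => 0) f M `|M| m0 mf z0 f0.
rewrite sExp0 // add0e in up; rewrite sExp0 // in lo.
have {}up : (sExp P f <= M%:E)%E.
  by apply: up => w; rewrite add0r; apply: le_trans (ler_norm _) (fM w).
have {}lo : (0 <= sExp P f + M%:E)%E.
  apply: lo => w; rewrite -lerBlDr sub0r.
  by move: (fM w); rewrite ler_norml => /andP[].
move: up lo; case: (sExp P f) => [r| |] //=.
  rewrite !lee_fin => up lo; split => //; rewrite ler_norml up andbT.
  by rewrite -lerBlDr sub0r in lo.
Qed.


Lemma nrow m n (a : 'rV[R]_m) (b : 'rV[R]_n) : `|row_mx a b| <= `|a| + `|b|.
Proof.
apply: mxnorm_le; first by rewrite addr_ge0.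
move=> i j; rewrite (ord1 i); case: (split_ordP j) => k ->.
  by rewrite row_mxEl; apply: le_trans (mxnorm_ge _ _ _ a 0 k) _; rewrite lerDl.
by rewrite row_mxEr; apply: le_trans (mxnorm_ge _ _ _ b 0 k) _; rewrite lerDr.
Qed.

Lemma nlsub m n (z : 'rV[R]_(m + n)) : `|lsubmx z| <= `|z|.
Proof.
apply: mxnorm_le => // i j; rewrite mxE; exact: mxnorm_ge.
Qed.

Lemma nrsub m n (z : 'rV[R]_(m + n)) : `|rsubmx z| <= `|z|.
Proof.
apply: mxnorm_le => // i j; rewrite mxE; exact: mxnorm_ge.
Qed.

Lemma drow m n (a a' : 'rV[R]_m) (b b' : 'rV[R]_n) :
  `|row_mx a b - row_mx a' b'| <= `|a - a'| + `|b - b'|.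
Proof. by rewrite opp_row_mx add_row_mx; exact: nrow. Qed.

Lemma dlsub m n (z z' : 'rV[R]_(m + n)) : `|lsubmx z - lsubmx z'| <= `|z - z'|.
Proof. by rewrite -linearB; exact: nlsub. Qed.

Lemma drsub m n (z z' : 'rV[R]_(m + n)) : `|rsubmx z - rsubmx z'| <= `|z - z'|.
Proof. by rewrite -linearB; exact: nrsub. Qed.

Lemma dconst (y y' : R) : `|(const_mx y : 'rV[R]_1) - const_mx y'| <= `|y - y'|.
Proof. by apply: mxnorm_le => // i j; rewrite !mxE. Qed.


Lemma bLip_split p q (F : 'rV[R]_p -> 'rV[R]_q -> R) B L :
  (forall x a, `|F x a| <= B) ->
  (forall x a x' a', `|F x a - F x' a'| <= L * (`|x - x'| + `|a - a'|)) ->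
  bLip (fun z : 'rV[R]_(p + q) => F (lsubmx z) (rsubmx z)).
Proof.
move=> FB FL; split; first by exists B.
exists (`|L| + `|L|) => z z'.
apply: le_trans (FL _ _ _ _) _.
apply: (le_trans (y := `|L| * (`|lsubmx z - lsubmx z'| + `|rsubmx z - rsubmx z'|))).
  by apply: ler_wpM2r; [rewrite addr_ge0 | exact: ler_norm].
rewrite mulrDl mulrDr; apply: lerD; apply: ler_wpM2l => //; [exact: dlsub | exact: drsub].
Qed.

Lemma indep_sel p q p' q' (X : Omega -> 'rV[R]_p) (Y : Omega -> 'rV[R]_q)
  (X' : Omega -> 'rV[R]_p') (Y' : Omega -> 'rV[R]_q')
  (sg : 'I_p' -> 'I_p) (rh : 'I_q' -> 'I_q) :
  (forall w j, X' w 0 j = X w 0 (sg j)) -> (forall w j, Y' w 0 j = Y w 0 (rh j)) ->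
  indep P X Y -> indep P X' Y'.
Proof.
move=> HX HY H phi [[B hB] [L hL]].
pose tau (k : 'I_(p' + q')) : 'I_(p + q) :=
  match @fintype.split p' q' k with inl a => lshift q (sg a) | inr b => rshift p (rh b) end.
pose sel (z : 'rV[R]_(p + q)) : 'rV[R]_(p' + q') := \row_k z 0 (tau k).
have selE : forall (x : 'rV[R]_p) (y : 'rV[R]_q) (x' : 'rV[R]_p') (y' : 'rV[R]_q'), (forall j, x' 0 j = x 0 (sg j)) ->
    (forall j, y' 0 j = y 0 (rh j)) -> sel (row_mx x y) = row_mx x' y'.
  move=> x y x' y' hx hy; apply/rowP => k; rewrite /sel /tau mxE.
  case: (split_ordP k) => j ->.
    by rewrite !row_mxEl hx.
  by rewrite !row_mxEr hy.
have Lip : bLip (fun z => phi (sel z)).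
  split; first by exists B.
  exists `|L| => z z'; apply: le_trans (hL _ _) _.
  apply: (le_trans (y := `|L| * `|sel z - sel z'|)).
    by apply: ler_wpM2r => //; exact: ler_norm.
  apply: ler_wpM2l => //; apply: mxnorm_le => // i k.
  have := mxnorm_ge _ _ _ (z - z') 0 (tau k).
  by rewrite !mxE.
have := H _ Lip => /=.
have -> : (fun w => phi (sel (row_mx (X w) (Y w)))) =
          (fun w => phi (row_mx (X' w) (Y' w))).
  by apply: funext => w; rewrite (selE _ _ (X' w) (Y' w)).
have -> : (fun w => sExp P (fun w' => phi (sel (row_mx (X w) (Y w'))))) =
          (fun w => sExp P (fun w' => phi (row_mx (X' w) (Y' w')))).
  apply: funext => w; congr sExp; apply: funext => w'.
  by rewrite (selE _ _ (X' w) (Y' w')).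
done.
Qed.


Lemma indepE p q (X : Omega -> 'rV[R]_p) (Y : Omega -> 'rV[R]_q)
  (phi : 'rV[R]_(p + q) -> R) (F : Omega -> Omega -> R) :
  indep P X Y -> bLip phi -> (forall w w', phi (row_mx (X w) (Y w')) = F w w') ->
  sExp P (fun w => F w w) = sExpE P (fun w => sExp P (fun w' => F w w')).
Proof.
move=> H hb hF; have := H phi hb.
have -> : (fun w => phi (row_mx (X w) (Y w))) = (fun w => F w w).
  by apply: funext => w; rewrite hF.
have -> : (fun w => sExp P (fun w' => phi (row_mx (X w) (Y w')))) =
          (fun w => sExp P (fun w' => F w w')).
  by apply: funext => w; congr sExp; apply: funext => w'; rewrite hF.
done.
Qed.

Section Core.
Variables (p : nat) (X : Omega -> 'rV[R]_p) (Vv Ee : Omega -> 'rV[R]_1) (Es : Omega -> R).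
Hypotheses (PQ : exists Q, P Q) (mEs : measurable_fun setT Es)
  (HE : forall w, Ee w = const_mx (Es w)).

Section Phi.
Variables (Phi : 'rV[R]_p -> 'rV[R]_1 -> 'rV[R]_1 -> R) (B L : R).
Hypotheses (hB : forall x a b, `|Phi x a b| <= B)
  (hL : forall x a b x' a' b',
    `|Phi x a b - Phi x' a' b'| <= L * (`|x - x'| + `|a - a'| + `|b - b'|)).

Definition psi x a := fine (sExp P (fun w => Phi x a (Ee w))).

Lemma meas_Phi x a : measurable_fun setT (fun w => Phi x a (Ee w)).
Proof.
have -> : (fun w => Phi x a (Ee w)) = (fun y => Phi x a (const_mx y)) \o Es.
  by apply: funext => w /=; rewrite HE.
apply: measurableT_comp => //; apply: measurable_realfun.continuous_measurable_fun.
apply: (lip_cont _ `|L|) => y y'.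
apply: le_trans (hL _ _ _ _ _ _) _.
rewrite !subrr !normr0 !add0r.
apply: (le_trans (y := `|L| * `|(const_mx y : 'rV[R]_1) - const_mx y'|)).
  by apply: ler_wpM2r => //; exact: ler_norm.
by apply: ler_wpM2l => //; exact: dconst.
Qed.

Lemma fin_Phi x a : sExp P (fun w => Phi x a (Ee w)) = (psi x a)%:E /\ `|psi x a| <= B.
Proof. exact: (sExp_fin _ B PQ (meas_Phi x a) (fun w => hB _ _ _)). Qed.

Lemma psi_B x a : `|psi x a| <= B.
Proof. by case: (fin_Phi x a). Qed.

Lemma psi_L x a x' a' : `|psi x a - psi x' a'| <= L * (`|x - x'| + `|a - a'|).
Proof.
have key : forall x a x' a', psi x a <= psi x' a' + L * (`|x - x'| + `|a - a'|).
  move=> x1 a1 x2 a2.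
  have := sExp_le (fun w => Phi x1 a1 (Ee w)) (fun w => Phi x2 a2 (Ee w))
    (L * (`|x1 - x2| + `|a1 - a2|)) B (meas_Phi _ _) (meas_Phi _ _)
    (fun w => hB _ _ _) (fun w => hB _ _ _).
  rewrite (fin_Phi x1 a1).1 (fin_Phi x2 a2).1 -EFinD lee_fin; apply => w.
  apply: ler_distlDr; apply: le_trans (hL _ _ _ _ _ _) _.
  by rewrite subrr normr0 addr0.
rewrite ler_distl key andbT lerBlDr.
by rewrite [`|x - x'|]distrC [`|a - a'|]distrC key.
Qed.

Lemma inner_eq (HVE : indep P Vv Ee) x :
  sExp P (fun w => Phi x (Vv w) (Ee w)) = sExp P (fun w => psi x (Vv w)).
Proof.
have Lip2 : bLip (fun z : 'rV[R]_(1 + 1) => Phi x (lsubmx z) (rsubmx z)).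
  apply: (bLip_split _ _ _ B L) => [a b|a b a' b']; first exact: hB.
  by apply: le_trans (hL _ _ _ _ _ _) _; rewrite subrr normr0 add0r.
have := HVE _ Lip2 => /=.
have -> : (fun w => Phi x (lsubmx (row_mx (Vv w) (Ee w))) (rsubmx (row_mx (Vv w) (Ee w))))
   = (fun w => Phi x (Vv w) (Ee w)).
  by apply: funext => w; rewrite row_mxKl row_mxKr.
move=> ->; rewrite [in RHS]/sExp; congr sExpE; apply: funext => w.
have -> : (fun w' => Phi x (lsubmx (row_mx (Vv w) (Ee w'))) (rsubmx (row_mx (Vv w) (Ee w'))))
   = (fun w' => Phi x (Vv w) (Ee w')).
  by apply: funext => w'; rewrite row_mxKl row_mxKr.
exact: (fin_Phi x (Vv w)).1.
Qed.

Lemma psi_bLip : bLip (fun z : 'rV[R]_(p + 1) => psi (lsubmx z) (rsubmx z)).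
Proof. exact: (bLip_split _ _ _ B L psi_B psi_L). Qed.

End Phi.

Lemma Phi_lip_aux (l s t1 t2 T : R) : 0 <= l -> 0 <= s -> t1 <= T -> t2 <= T ->
  l * (s + t1 + t2) <= (l + l) * (s + T).
Proof. move=> l0 s0 h1 h2; nra. Qed.

Lemma Phi_lip_aux2 (l s t1 t2 T : R) : 0 <= l -> 0 <= s -> t1 <= T -> t2 <= T ->
  l * (t1 + t2 + s) <= (l + l) * (T + s).
Proof. move=> l0 s0 h1 h2; nra. Qed.

Lemma coreA : indep P X (fun w => row_mx (Vv w) (Ee w)) -> indep P Vv Ee ->
  indep P X Vv -> indep P (fun w => row_mx (X w) (Vv w)) Ee.
Proof.
move=> H1 H2 H3 phi [[B hB] [L hL]].
pose Phi (x : 'rV[R]_p) (a b : 'rV[R]_1) := phi (row_mx (row_mx x a) b).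
have PB : forall x a b, `|Phi x a b| <= B by move=> *; exact: hB.
have PL : forall x a b x' a' b', `|Phi x a b - Phi x' a' b'| <=
    `|L| * (`|x - x'| + `|a - a'| + `|b - b'|).
  move=> x a b x' a' b'; apply: le_trans (hL _ _) _.
  apply: (le_trans (y := `|L| * `|row_mx (row_mx x a) b - row_mx (row_mx x' a') b'|)).
    by apply: ler_wpM2r => //; exact: ler_norm.
  apply: ler_wpM2l => //; apply: le_trans (drow _ _ _ _ _ _) _.
  by apply: lerD => //; exact: drow.
have Lip1 : bLip (fun z : 'rV[R]_(p + (1 + 1)) =>
    (fun x (u : 'rV[R]_(1 + 1)) => Phi x (lsubmx u) (rsubmx u)) (lsubmx z) (rsubmx z)).
  apply: (bLip_split _ _ (fun x (u : 'rV[R]_(1 + 1)) => Phi x (lsubmx u) (rsubmx u)) B (`|L| + `|L|)) => [x u|x u x' u'].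
    exact: PB.
  apply: le_trans (PL _ _ _ _ _ _) _.
  apply: Phi_lip_aux => //; [exact: dlsub | exact: drsub].
change (sExp P (fun w => Phi (X w) (Vv w) (Ee w)) =
  sExpE P (fun w => sExp P (fun w' => Phi (X w) (Vv w) (Ee w')))).
transitivity (sExpE P (fun w => sExp P (fun w' => Phi (X w) (Vv w') (Ee w')))).
  apply: (indepE _ _ X _ _ (fun w w' => Phi (X w) (Vv w') (Ee w')) H1 Lip1).
  by move=> w w' /=; rewrite !(row_mxKl, row_mxKr).
transitivity (sExpE P (fun w => sExp P (fun w' => psi Phi (X w) (Vv w')))).
  by congr sExpE; apply: funext => w; exact: (inner_eq Phi B `|L| PB PL H2).
transitivity (sExp P (fun w => psi Phi (X w) (Vv w))).
  symmetry; apply: (indepE _ _ X Vv _ (fun w w' => psi Phi (X w) (Vv w')) H3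
     (psi_bLip Phi B `|L| PB PL)).
  by move=> w w' /=; rewrite row_mxKl row_mxKr.
rewrite [LHS]/sExp; congr sExpE; apply: funext => w.
by rewrite (fin_Phi Phi B `|L| PB PL (X w) (Vv w)).1.
Qed.

Lemma coreB : indep P X Vv -> indep P (fun w => row_mx (X w) (Vv w)) Ee ->
  indep P Vv Ee -> indep P X (fun w => row_mx (Vv w) (Ee w)).
Proof.
move=> H3 H1 H2 phi [[B hB] [L hL]].
pose Phi (x : 'rV[R]_p) (a b : 'rV[R]_1) := phi (row_mx x (row_mx a b)).
have PB : forall x a b, `|Phi x a b| <= B by move=> *; exact: hB.
have PL : forall x a b x' a' b', `|Phi x a b - Phi x' a' b'| <=
    `|L| * (`|x - x'| + `|a - a'| + `|b - b'|).
  move=> x a b x' a' b'; apply: le_trans (hL _ _) _.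
  apply: (le_trans (y := `|L| * `|row_mx x (row_mx a b) - row_mx x' (row_mx a' b')|)).
    by apply: ler_wpM2r => //; exact: ler_norm.
  apply: ler_wpM2l => //; apply: le_trans (drow _ _ _ _ _ _) _.
  by rewrite -addrA; apply: lerD => //; exact: drow.
have Lip1 : bLip (fun z : 'rV[R]_(p + 1 + 1) =>
    (fun (u : 'rV[R]_(p + 1)) b => Phi (lsubmx u) (rsubmx u) b) (lsubmx z) (rsubmx z)).
  apply: (bLip_split _ _ (fun (u : 'rV[R]_(p + 1)) b => Phi (lsubmx u) (rsubmx u) b) B (`|L| + `|L|)) => [u b|u b u' b'].
    exact: PB.
  apply: le_trans (PL _ _ _ _ _ _) _.
  apply: Phi_lip_aux2 => //; [exact: dlsub | exact: drsub].
change (sExp P (fun w => Phi (X w) (Vv w) (Ee w)) =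
  sExpE P (fun w => sExp P (fun w' => Phi (X w) (Vv w') (Ee w')))).
transitivity (sExpE P (fun w => sExp P (fun w' => Phi (X w) (Vv w) (Ee w')))).
  apply: (indepE _ _ (fun w => row_mx (X w) (Vv w)) _ _
    (fun w w' => Phi (X w) (Vv w) (Ee w')) H1 Lip1).
  by move=> w w' /=; rewrite !(row_mxKl, row_mxKr).
transitivity (sExp P (fun w => psi Phi (X w) (Vv w))).
  rewrite [RHS]/sExp; congr sExpE; apply: funext => w.
  by rewrite (fin_Phi Phi B `|L| PB PL (X w) (Vv w)).1.
transitivity (sExpE P (fun w => sExp P (fun w' => psi Phi (X w) (Vv w')))).
  apply: (indepE _ _ X Vv _ (fun w w' => psi Phi (X w) (Vv w')) H3
     (psi_bLip Phi B `|L| PB PL)).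
  by move=> w w' /=; rewrite row_mxKl row_mxKr.
by congr sExpE; apply: funext => w; rewrite (inner_eq Phi B `|L| PB PL H2).
Qed.

End Core.

Lemma indep_empty p q (X : Omega -> 'rV[R]_p) (Y : Omega -> 'rV[R]_q) :
  ~ (exists Q, P Q) -> indep P X Y.
Proof.
move=> nP phi _.
have E : forall f : Omega -> \bar R, sExpE P f = -oo%E.
  move=> f; rewrite /sExpE.
  have -> : [set (\int[Q]_w f w)%E | Q in P] = set0.
    by apply/seteqP; split => x // [Q PQ _]; exfalso; apply: nP; exists Q.
  exact: ereal_sup0.
by rewrite /sExp !E.
Qed.

Lemma blk_split (Z : nat -> Omega -> R) k a b w :
  blk Z k (a + b) w = row_mx (blk Z k a w) (blk Z (k + a) b w).
Proof.
apply/rowP => j; rewrite mxE; case: (split_ordP j) => l ->.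
  by rewrite row_mxEl mxE.
by rewrite row_mxEr mxE /= addnA.
Qed.

Lemma blk1 (Z : nat -> Omega -> R) k w : blk Z k 1 w = const_mx (Z k w).
Proof. by apply/rowP => j; rewrite !mxE (ord1 j) addn0. Qed.

Lemma XV_of_XVE (Z : nat -> Omega -> R) p :
  indep P (blk Z 0 p) (blk Z p 2) -> indep P (blk Z 0 p) (blk Z p 1).
Proof.
apply: (indep_sel _ _ _ _ _ _ _ _ id (fun _ => ord0)) => // w j.
by rewrite !mxE (ord1 j).
Qed.

Lemma VE_of_XV1 (Z : nat -> Omega -> R) p :
  indep P (blk Z 0 (p + 1)) (blk Z (p + 1) 1) -> indep P (blk Z p 1) (blk Z (p + 1) 1).
Proof.
have lt : (p < p + 1)%N by rewrite addn1.
apply: (indep_sel _ _ _ _ _ _ _ _ (fun _ => Ordinal lt) id) => // w j.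
by rewrite !mxE (ord1 j) addn0 add0n.
Qed.

End S.

Lemma interV (d : measure_display) (T : measurableType d) (R : realType) (V e : nat -> T -> R) i :
  interleave V e (2 * i) = V i.
Proof. by rewrite /interleave mul2n odd_double doubleK. Qed.

Lemma interE (d : measure_display) (T : measurableType d) (R : realType) (V e : nat -> T -> R) i :
  interleave V e (2 * i + 1) = e i.
Proof.
by rewrite /interleave mul2n addn1 /= odd_double /= uphalf_double.
Qed.

Theorem mainTheorem8 (d : measure_display) (Omega : measurableType d)
  (R : realType) (P : set (probability Omega R)) (sl sh : R) (n : nat)
  (V e : nat -> Omega -> R) :
  0 <= sl -> sl <= sh ->
  (forall i, (i < n)%N -> measurable_fun setT (V i)) ->
  (forall i, (i < n)%N -> measurable_fun setT (e i)) ->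
  (forall i, (i < n)%N -> maximal_distributed P (V i) sl sh) ->
  (forall i, (i < n)%N -> std_normal P (e i)) ->
  (seq_indep P (interleave V e) (2 * n) <-> (F1 P V e n /\ F2 P V e n)).
Proof.
move=> _ _ mV me _ _.
case: (pselect (exists Q, P Q)) => [PQ | nP]; last first.
  split => _; first by split => i *; apply: indep_empty.
  by move=> k *; apply: indep_empty.
set Z := interleave V e.
have eV : forall i, blk V i 1 = blk Z (2 * i) 1.
  move=> i; apply: funext => w; apply/rowP => j.
  by rewrite !mxE (ord1 j) !addn0 /Z interV.
have eE : forall i, blk e i 1 = blk Z (2 * i + 1) 1.
  move=> i; apply: funext => w; apply/rowP => j.
  by rewrite !mxE (ord1 j) !addn0 /Z interE.
have sp : forall p, blk Z 0 (p + 1) = (fun w => row_mx (blk Z 0 p w) (blk Z p 1 w)).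
  by move=> p; apply: funext => w; rewrite blk_split.
have sq : forall p, blk Z p 2 = (fun w => row_mx (blk Z p 1 w) (blk Z (p + 1) 1 w)).
  by move=> p; apply: funext => w; rewrite (blk_split Z p 1 1).
have mE : forall i, (i < n)%N -> measurable_fun setT (Z (2 * i + 1)).
  by move=> i lin; rewrite /Z interE; exact: me.
split.
- move=> Hs.
  have HF2 : forall i, (i < n)%N -> indep P (blk Z (2 * i) 1) (blk Z (2 * i + 1) 1).
    move=> i lin; apply: VE_of_XV1; apply: Hs; lia.
  split.
  + move=> i i1 lin.
    rewrite sq; apply: (coreB _ _ _ _ _ (Z (2 * i + 1)) PQ (mE i lin) (blk1 Z _)).
    * by apply: Hs; lia.
    * by rewrite -sp; apply: Hs; lia.
    * exact: HF2.
  + by move=> i lin; rewrite eV eE; exact: HF2.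
- move=> [HF1 HF2] k k1 k2.
  have HF2' : forall i, (i < n)%N -> indep P (blk Z (2 * i) 1) (blk Z (2 * i + 1) 1).
    by move=> i lin; rewrite -eV -eE; exact: HF2.
  have kE := odd_double_half k.
  case ok : (odd k) in kE.
  + have kE' : k = (2 * k./2 + 1)%N.
      by rewrite -[in LHS]kE mul2n addn1.
    move: k1 k2; rewrite kE'; set i := k./2 => k1 k2.
    have lin : (i < n)%N by lia.
    case: (posnP i) => [i0 | ipos].
      have := HF2' i lin; rewrite i0 /=; exact.
    rewrite sp; apply: (coreA _ _ _ _ _ (Z (2 * i + 1)) PQ (mE i lin) (blk1 Z _)).
    * by rewrite -sq; apply: HF1; lia.
    * exact: HF2'.
    * by apply: XV_of_XVE; apply: HF1; lia.
  + have kE' : k = (2 * k./2)%N.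
      by rewrite -[in LHS]kE mul2n.
    move: k1 k2; rewrite kE'; set i := k./2 => k1 k2.
    by apply: XV_of_XVE; apply: HF1; lia.
Qed.
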